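(* Consider a passive, minimal interconnected system $\Sigma_c=(A_c,B_c,C_c,D_c)$ consisting of $k$ passive, minimal subsystems $\Sigma_1,\dots,\Sigma_k$, a positive semi-definite interconnection matrix $S$ and an external input matrix $\mathcal{B}$. If $\Sigma_c$ is reduced to $\hat{\Sigma}_c$ using the Passive Interconnected Balanced Truncation (PIBT) algorithm described in the context, then the reduced subsystems $\hat{\Sigma}_j$, $j\in\{1,\dots,k\}$, and the reduced interconnected system $\hat{\Sigma}_c$ are passive.
   Context: A square, minimal system $\Sigma=(A,B,C,D)$, $\dot x=Ax+Bu$, $y=Cx+Du$, is passive iff there is $\Xi=\Xi^\top\succ0$ with $\begin{bmatrix}A^\top\Xi+\Xi A & \Xi B-C^\top\\ B^\top\Xi-C & -(D+D^\top)\end{bmatrix}\preceq0$ (positive real lemma). Subsystems $\Sigma_j=(A_j,B_j,C_j,D_j)$ with states $x_j\in\mathbb{R}^{n_j}$, inputs $v_j$ and outputs $z_j$ in $\mathbb{R}^{p_j}$ are passive and minimal. Their parallel composition is $\Sigma_b=(A_b,B_b,C_b,D_b)$ with $A_b=\mathrm{diag}(A_1,\dots,A_k)$ etc. and stacked states/inputs/outputs $x_b,v_b,z_b$. The interconnection is $v_b=-Sz_b+\mathcal{B}u_c$, $y_c=\mathcal{B}^\top z_b$ with $S\succeq0$ such that $I+SD_b$, $I+D_bS$ are nonsingular, giving $A_c=A_b-B_b\mathcal{D}_2SC_b$, $B_c=B_b\mathcal{D}_2\mathcal{B}$, $C_c=\mathcal{B}^\top\mathcal{D}_1C_b$, $D_c=\mathcal{B}^\top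 D_b\mathcal{D}_2\mathcal{B}$, $\mathcal{D}_1=(I+D_bS)^{-1}$, $\mathcal{D}_2=(I+SD_b)^{-1}$; $\Sigma_c$ is assumed asymptotically stable. It was shown earlier that such a negative feedback interconnection of a passive $\Sigma_b$ with $S\succeq0$ and $\mathcal{B}$ is passive. PIBT: (1) compute the controllability Gramian $P_c$ of $\Sigma_c$ from $0=A_cP_c+P_cA_c^\top+B_cB_c^\top$ and partition it into blocks $P_{i,j}\in\mathbb{R}^{n_i\times n_j}$ according to the subsystem states; (2) for each $j$ compute the (minimal) available storage $\Xi_j$ solving the positive real LMI above for $(A_j,B_j,C_j,D_j)$; (3) balance $\Sigma_j$ with input Gramian $X_i=P_{j,j}$ and output Gramian $X_o=\Xi_j$: Cholesky factors $X_i=R_i^\top R_i$, $X_o=R_o^\top R_o$, SVD $R_oR_i^\top=U\Gamma V$, $T=\Gamma^{-1/2}U^\top R_o$, $T^{-1}=R_i^\top V\Gamma^{-1/2}$, balanced realization $(TA_jT^{-1},TB_j,C_jT^{-1},D_j)$, for which the transformed Gramians both equal the diagonal sorted $\Gamma$; (4) partition the balanced realization as $\begin{bmatrix}\tilde A_{11}&\tilde A_{12}\\ \tilde A_{21}&\tilde A_{22}\end{bmatrix}$, $\begin{bmatrix}\tilde B_1\\ \tilde B_2\end{bmatrix}$, $[\tilde C_1\ \tilde C_2]$, with the first block corresponding to the largest diagonal entries of $\Gamma$, and keep $\hat{\Sigma}_j=(\tilde A_{11},\tilde B_1,\tilde C_1,D_j)$; (5) interconnect the $\hat{\Sigma}_j$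 with $S$ and $\mathcal{B}$ via the same formulas to obtain $\hat{\Sigma}_c$. *)

(* Defs.v *)
From HB Require Import structures.
From mathcomp Require Import all_boot all_order all_algebra.
From mathcomp Require Import complex.
Set Implicit Arguments. Unset Strict Implicit. Unset Printing Implicit Defensive.
Import Order.TTheory GRing.Theory Num.Theory.
Local Open Scope ring_scope.

Section Defs.
Variable R : rcfType.

Definition posdef n (X : 'M[R]_n) : Prop :=
  X^T = X /\ forall v : 'rV[R]_n, v != 0 -> 0 < (v *m X *m v^T) 0 0.
Definition psd n (X : 'M[R]_n) : Prop :=
  X^T = X /\ forall v : 'rV[R]_n, 0 <= (v *m X *m v^T) 0 0.
Definition nsd n (X : 'M[R]_n) : Prop := psd (- X).

Record sys (n p : nat) := Sys {
  sA : 'M[R]_n; sB : 'M[R]_(n, p); sC : 'M[R]_(p, n); sD : 'M[R]_p }.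

Definition prl_mx n p (s : sys n p) (Xi : 'M[R]_n) : 'M[R]_(n + p) :=
  block_mx ((sA s)^T *m Xi + Xi *m sA s) (Xi *m sB s - (sC s)^T)
           ((sB s)^T *m Xi - sC s) (- (sD s + (sD s)^T)).

(** Passivity, through the positive real lemma. *)
Definition passive n p (s : sys n p) : Prop :=
  exists Xi : 'M[R]_n, posdef Xi /\ nsd (prl_mx s Xi).

(** The (minimal) available storage: the least solution (Loewner order)
    of the positive real LMI. *)
Definition available_storage n p (s : sys n p) (Xi : 'M[R]_n) : Prop :=
  [/\ posdef Xi, nsd (prl_mx s Xi) &
      forall X : 'M[R]_n, posdef X -> nsd (prl_mx s X) -> psd (X - Xi)].

Definition controllable n p (A : 'M[R]_n) (B : 'M[R]_(n, p)) : Prop :=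
  \rank (\mxrow_(i < n) (A ^+ i *m B)) = n.
Definition minimal n p (s : sys n p) : Prop :=
  controllable (sA s) (sB s) /\ controllable (sA s)^T (sC s)^T.

Definition asymp_stable n p (s : sys n p) : Prop :=
  forall z : R[i], eigenvalue (map_mx (real_complex R) (sA s)) z ->
    complex.Re z < 0.

Definition bdiag k (n p : 'I_k -> nat) (M : forall j, 'M[R]_(n j, p j))
  : 'M[R]_(\sum_j n j, \sum_j p j) :=
  \mxblock_(i, j)
    (if i =P j is ReflectT e then castmx (erefl, congr1 p e) (M i) else 0).

Definition parallel k (n p : 'I_k -> nat) (s : forall j, sys (n j) (p j))
  : sys (\sum_j n j) (\sum_j p j) :=
  Sys (bdiag (fun j => sA (s j))) (bdiag (fun j => sB (s j)))
      (bdiag (fun j => sC (s j))) (bdiag (fun j => sD (s j))).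

(** Interconnection v_b = - S z_b + Bc u_c, y_c = Bc^T z_b. *)
Definition interconnect N P m (sb : sys N P) (S : 'M[R]_P) (Bc : 'M[R]_(P, m))
  : sys N m :=
  let D1 := invmx (1%:M + sD sb *m S) in
  let D2 := invmx (1%:M + S *m sD sb) in
  Sys (sA sb - sB sb *m D2 *m S *m sC sb) (sB sb *m D2 *m Bc)
      (Bc^T *m D1 *m sC sb) (Bc^T *m sD sb *m D2 *m Bc).

Definition cholesky n (X R0 : 'M[R]_n) : Prop :=
  [/\ X = R0^T *m R0, forall a b : 'I_n, (b < a)%N -> R0 a b = 0 &
      forall a : 'I_n, 0 < R0 a a].

Definition orthogonal n (U : 'M[R]_n) : Prop :=
  U^T *m U = 1%:M /\ U *m U^T = 1%:M.

Definition svd n (M U : 'M[R]_n) (g : 'rV[R]_n) (V : 'M[R]_n) : Prop :=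
  [/\ orthogonal U, orthogonal V, M = U *m diag_mx g *m V^T,
      forall a : 'I_n, 0 <= g 0 a &
      forall a b : 'I_n, (a <= b)%N -> g 0 b <= g 0 a].

Definition diag_isqrt n (g : 'rV[R]_n) : 'M[R]_n :=
  diag_mx (\row_a (Num.sqrt (g 0 a))^-1).

Definition balT n (Ro U : 'M[R]_n) (g : 'rV[R]_n) : 'M[R]_n :=
  diag_isqrt g *m U^T *m Ro.
Definition balTinv n (Ri V : 'M[R]_n) (g : 'rV[R]_n) : 'M[R]_n :=
  Ri^T *m V *m diag_isqrt g.

Definition balanced n p (s : sys n p) (T Tinv : 'M[R]_n) : sys n p :=
  Sys (T *m sA s *m Tinv) (T *m sB s) (sC s *m Tinv) (sD s).

Definition truncate n p r (h : (r <= n)%N) (s : sys n p) : sys r p :=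
  Sys (\matrix_(a < r, b < r) sA s (widen_ord h a) (widen_ord h b))
      (\matrix_(a < r, b < p) sB s (widen_ord h a) b)
      (\matrix_(a < p, b < r) sC s a (widen_ord h b))
      (sD s).

End Defs.

(* Main.v *)
Require Import Defs.
From HB Require Import structures.
From mathcomp Require Import all_boot all_order all_algebra.
From mathcomp Require Import complex.
From Stdlib Require Import FunctionalExtensionality.
From mathcomp Require Import ring.
Set Warnings "-notation-overridden,-ambiguous-paths".
Set Implicit Arguments. Unset Strict Implicit. Unset Printing Implicit Defensive.
Import Order.TTheory GRing.Theory Num.Theory.
Local Open Scope ring_scope.

Section Gen.
Variable R : rcfType.

Definition Nmx n p (s : sys R n p) (X : 'M[R]_n) : 'M[R]_(n + p) :=
  block_mx (X *m sA s) (X *m sB s) (- sC s) (- sD s).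

Lemma prlN n p (s : sys R n p) X : X^T = X ->
  prl_mx s X = Nmx s X + (Nmx s X)^T.
Proof.
move=> hX; rewrite /prl_mx /Nmx tr_block_mx add_block_mx !trmx_mul hX !linearN /=.
by rewrite [_^T *m X + _]addrC [X *m sB s + _]addrC [- sC s + _]addrC opprD.
Qed.

Lemma nsd_congr a b (M : 'M[R]_a) (L : 'M[R]_(a, b)) :
  nsd M -> nsd (L^T *m M *m L).
Proof.
move=> [hs hf]; split.
  by rewrite -mulNmx -mulmxN !trmx_mul trmxK hs mulmxA.
move=> v; rewrite -mulNmx -mulmxN.
have -> : v *m (L^T *m (- M) *m L) *m v^T = (v *m L^T) *m (- M) *m (v *m L^T)^T.
  by rewrite trmx_mul trmxK !mulmxA.
exact: hf.
Qed.

Lemma nsd_congr2 a b c (M : 'M[R]_a) (L : 'M[R]_(a, b)) (Q : 'M[R]_c) (K : 'M[R]_(c, b)) :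
  nsd M -> psd Q -> nsd (L^T *m M *m L - K^T *m Q *m K).
Proof.
move=> /(nsd_congr L) [hs hf] [qs qf].
have hs' : (L^T *m M *m L)^T = L^T *m M *m L.
  by apply: oppr_inj; rewrite -hs linearN.
have qs' : (K^T *m Q *m K)^T = K^T *m Q *m K.
  by rewrite !trmx_mul trmxK qs mulmxA.
split; first by rewrite linearN linearB /= hs' qs'.
move=> v; rewrite opprB mulmxDr mulmxDl mxE addrC ler_wpDl //.
  have -> : v *m (K^T *m Q *m K) *m v^T = (v *m K^T) *m Q *m (v *m K^T)^T.
    by rewrite trmx_mul trmxK !mulmxA.
  exact: qf.
Qed.


Lemma z1 (V : zmodType) (a b c d : V) : a + b = a - c + (b - d) + (c + d).
Proof. by rewrite addrACA !subrK. Qed.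

Lemma z2 (V : zmodType) (a b c d : V) : a - b = a - c - (b - d) + (c - d).
Proof. by rewrite opprB addrACA subrK addrAC subrr add0r. Qed.

Lemma psd_double a (Q : 'M[R]_a) : psd Q -> psd (Q + Q).
Proof.
move=> [qs qf]; split; first by rewrite linearD /= qs.
by move=> v; rewrite mulmxDr mulmxDl mxE addr_ge0.
Qed.

Lemma interconnect_nsd N P m (sb : sys R N P) (S : 'M[R]_P) (Bc : 'M[R]_(P, m)) X :
  X^T = X -> psd S ->
  (1%:M + sD sb *m S) \in unitmx -> (1%:M + S *m sD sb) \in unitmx ->
  nsd (prl_mx sb X) -> nsd (prl_mx (interconnect sb S Bc) X).
Proof.
move=> hX hS u1 u2 hM.
have [Ss _] := hS.
set A := sA sb; set B := sB sb; set C := sC sb; set D := sD sb.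
set D1 := invmx (1%:M + D *m S); set D2 := invmx (1%:M + S *m D).
pose F := - (D2 *m S *m C); pose G := D2 *m Bc.
pose K1 := C + D *m F; pose K2 := D *m G.
pose L : 'M[R]_(N + P, N + m) := block_mx 1%:M 0 F G.
pose K := row_mx K1 K2.
have h1 : (1%:M + D *m S) *m D1 = 1%:M by apply: mulmxV.
have h2 : (1%:M + S *m D) *m D2 = 1%:M by apply: mulmxV.
have hSK1 : S *m K1 = D2 *m S *m C.
  have e : D2 *m S *m C + S *m D *m D2 *m S *m C = S *m C.
    by rewrite -!mulmxDl -{1}[D2]mul1mx -mulmxDl h2 mul1mx.
  by rewrite /K1 /F mulmxDr !mulmxN !mulmxA -e addrK.
have hSK2 : G + S *m K2 = Bc.
  by rewrite /G /K2 !mulmxA -mulmxDl -{1}[D2]mul1mx -mulmxDl h2 mul1mx.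
have hK1 : D1 *m C = K1.
  have e : (1%:M + D *m S) *m K1 = C.
    by rewrite mulmxDl mul1mx -mulmxA hSK1 /K1 /F mulmxN !mulmxA subrK.
  by rewrite -e mulKmx.
have hK1S : K1^T *m S = - F^T.
  by rewrite -[S in LHS]Ss -trmx_mul hSK1 /F linearN /= opprK.
have hK2S : K2^T *m S = (Bc - G)^T.
  by rewrite -[S in LHS]Ss -trmx_mul -hSK2 addrC addKr.
have key : Nmx (interconnect sb S Bc) X = L^T *m Nmx sb X *m L - K^T *m S *m K.
  have eF : F = - (D2 *m S *m C) by [].
  have eG : G = D2 *m Bc by [].
  have eK1 : K1 = C + D *m F by [].
  have eK2 : K2 = D *m G by [].
  rewrite /L /K; clearbody K1 K2 F G.
  rewrite /Nmx tr_block_mx !mulmx_block tr_row_mx mul_col_mx mul_col_row.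
  rewrite opp_block_mx add_block_mx /interconnect /= -/A -/B -/C -/D -/D1 -/D2.
  rewrite hK1S hK2S !trmx0 trmx1 !mul0mx !mulmx0 !mul1mx !mulmx1.
  congr block_mx.
  - have eA : A - B *m D2 *m S *m C = A + B *m F by rewrite eF mulmxN !mulmxA.
    rewrite eA mulmxDr mulNmx opprK eK1 mulmxDr !mulmxN mulmxDl !mulNmx !mulmxA.
    exact: z1.
  - rewrite add0r mulNmx opprK mulmxN mulmxDl mulNmx eK2 !mulmxA subrK.
    by rewrite eG !mulmxA.
  - have e : G^T *m K1 = G^T *m C + G^T *m D *m F by rewrite eK1 mulmxDr mulmxA.
    rewrite -mulmxA hK1 !add0r !mulmxN mulNmx linearB /= mulmxBl e.
    by rewrite opprB -opprD addKr.
  - have e : G^T *m K2 = G^T *m D *m G by rewrite eK2 mulmxA.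
    have e2 : Bc^T *m D *m D2 *m Bc = Bc^T *m K2 by rewrite eK2 eG !mulmxA.
    rewrite e2 !add0r mulmxN mulNmx linearB /= mulmxBl e.
    by rewrite opprB addKr.
rewrite !prlN // key.
have -> : L^T *m Nmx sb X *m L - K^T *m S *m K + (L^T *m Nmx sb X *m L - K^T *m S *m K)^T
   = L^T *m (Nmx sb X + (Nmx sb X)^T) *m L - K^T *m (S + S) *m K.
  rewrite linearB /= !trmx_mul !trmxK Ss !mulmxDr !mulmxDl !mulmxA.
  by rewrite opprD !addrA; congr (_ - _); rewrite addrAC.
by apply: nsd_congr2 => //; [rewrite -prlN | apply: psd_double].
Qed.

Lemma NmxT n p (s : sys R n p) X : X^T = X ->
  prl_mx s X = Nmx s X + (Nmx s X)^T.
Proof. exact: prlN. Qed.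

Lemma nsd_NL a b (N1 : 'M[R]_a) (N2 : 'M[R]_b) (L : 'M[R]_(a, b)) :
  N2 = L^T *m N1 *m L -> nsd (N1 + N1^T) -> nsd (N2 + N2^T).
Proof.
move=> -> h; have -> : L^T *m N1 *m L + (L^T *m N1 *m L)^T = L^T *m (N1 + N1^T) *m L.
  by rewrite !trmx_mul trmxK mulmxDr mulmxDl !mulmxA.
exact: nsd_congr.
Qed.

Lemma balanced_nsd n p (s : sys R n p) X T Ti :
  Ti *m T = 1%:M -> X^T = X -> nsd (prl_mx s X) ->
  nsd (prl_mx (balanced s T Ti) (Ti^T *m X *m Ti)).
Proof.
move=> hT hX hM.
have hX' : (Ti^T *m X *m Ti)^T = Ti^T *m X *m Ti by rewrite !trmx_mul trmxK hX mulmxA.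
rewrite prlN //; rewrite prlN // in hM.
apply: (nsd_NL (L := block_mx Ti 0 0 1%:M)) hM.
rewrite /Nmx tr_block_mx !mulmx_block !trmx0 trmx1 /balanced /=.
rewrite !mul0mx !mulmx0 !mul1mx !mulmx1 !addr0 !add0r.
congr block_mx.
- by rewrite -!mulmxA (mulmxA Ti) hT mul1mx.
- by rewrite -!mulmxA (mulmxA Ti) hT mul1mx.
- by rewrite mulNmx.
Qed.

Lemma posdef_diag n (g : 'rV[R]_n) : (forall a, 0 < g 0 a) -> posdef (diag_mx g).
Proof.
move=> hg; split; first by rewrite tr_diag_mx.
move=> v /eqP hv.
have [a ha] : exists a, v 0 a != 0.
  apply/existsP; apply: contraT; rewrite negb_exists => /forallP H.
  by case: hv; apply/matrixP => i j; rewrite (ord1 i) mxE; apply/eqP; rewrite -(negbK (_ == _)) H.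
rewrite mul_mx_diag mxE (bigD1 a) //= !mxE ltr_wpDr //.
  by apply: sumr_ge0 => i _; rewrite !mxE mulrAC -expr2 mulr_ge0 ?sqr_ge0 ?ltW.
by rewrite mulrAC -expr2; apply: mulr_gt0 => //; rewrite lt_def sqr_ge0 andbT sqrf_eq0 ha.
Qed.

Lemma trunc_nsd n p r (h : (r <= n)%N) (s : sys R n p) (g : 'rV[R]_n) :
  nsd (prl_mx s (diag_mx g)) ->
  nsd (prl_mx (truncate h s) (diag_mx (\row_a g 0 (widen_ord h a)))).
Proof.
move=> hM; rewrite prlN ?tr_diag_mx //; rewrite prlN ?tr_diag_mx // in hM.
pose f := widen_ord h.
pose Sel : 'M[R]_(r, n) := rowsub f 1%:M.
apply: (nsd_NL (L := block_mx Sel^T 0 0 1%:M)) hM.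
rewrite /Nmx tr_block_mx !mulmx_block !trmx0 trmx1 trmxK /truncate /=.
rewrite !mul0mx !mulmx0 !mul1mx !mulmx1 !addr0 !add0r.
have eS : forall q (M : 'M[R]_(n, q)), Sel *m M = rowsub f M by move=> q M; rewrite rowsubE.
have eST : forall q (M : 'M[R]_(q, n)), M *m Sel^T = colsub f M.
  move=> q M; have -> : Sel^T = colsub f 1%:M.
    by apply/matrixP => i j; rewrite !mxE eq_sym.
  by rewrite mulmx_colsub mulmx1.
congr block_mx.
- by rewrite eST !eS !mul_diag_mx; apply/matrixP => a b; rewrite !mxE.
- by rewrite !eS !mul_diag_mx; apply/matrixP => a b; rewrite !mxE.
- by rewrite eST; apply/matrixP => a b; rewrite !mxE.
Qed.

Section Bdiag.
Variables (k : nat).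

Lemma bdiag_blk (n p : 'I_k -> nat) (M : forall j, 'M[R]_(n j, p j)) i j :
  (if i =P j is ReflectT e then castmx (erefl, congr1 p e) (M i) else 0)
  = if i == j then (if i =P j is ReflectT e then castmx (erefl, congr1 p e) (M i) else 0) else 0.
Proof. by case: eqP. Qed.

Lemma bdiag_jj (n p : 'I_k -> nat) (M : forall j, 'M[R]_(n j, p j)) j :
  (if j =P j is ReflectT e then castmx (erefl, congr1 p e) (M j) else 0) = M j.
Proof.
case: eqP => // e; rewrite (eq_irrelevance e erefl) /=.
by rewrite castmx_id.
Qed.

Lemma bdiag_ij (n p : 'I_k -> nat) (M : forall j, 'M[R]_(n j, p j)) i j : i != j ->
  (if i =P j is ReflectT e then castmx (erefl, congr1 p e) (M i) else 0) = 0.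
Proof. by case: eqP. Qed.

Lemma row_bdiag q (n p : 'I_k -> nat) (M : forall j, 'M[R]_(n j, p j))
  (c : forall j, 'M[R]_(q, n j)) :
  \mxrow_j c j *m bdiag M = \mxrow_j (c j *m M j).
Proof.
rewrite /bdiag mul_mxrow_mxblock; apply: eq_mxrow => j.
rewrite (bigD1 j) //= bdiag_jj big1 ?addr0 // => i hij.
by rewrite bdiag_ij ?mulmx0.
Qed.

Lemma rowT_mxrow q q' (p : 'I_k -> nat) (c : forall j, 'M[R]_(q, p j))
  (d : forall j, 'M[R]_(q', p j)) :
  \mxrow_j c j *m (\mxrow_j d j)^T = \sum_j (c j *m (d j)^T).
Proof. by rewrite tr_mxrow mul_mxrow_mxcol. Qed.

Lemma tr_bdiag (n : 'I_k -> nat) (M : forall j, 'M[R]_(n j)) :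
  (bdiag M)^T = bdiag (fun j => (M j)^T).
Proof.
rewrite /bdiag tr_mxblock; apply: eq_mxblock => i j.
case: (eqVneq i j) => [<-|hij]; first by rewrite bdiag_jj (bdiag_jj (fun j => (M j)^T)).
by rewrite bdiag_ij 1?eq_sym // (bdiag_ij (fun j => (M j)^T)) ?trmx0.
Qed.

Lemma posdef_bdiag (n : 'I_k -> nat) (X : forall j, 'M[R]_(n j)) :
  (forall j, posdef (X j)) -> posdef (bdiag X).
Proof.
move=> hX; split.
  by rewrite tr_bdiag; congr bdiag; apply: functional_extensionality_dep => j; case: (hX j).
move=> v hv; rewrite -[v]submxrowK row_bdiag rowT_mxrow summxE.
have [j hj] : exists j, submxrow v j != 0.
  apply/existsP; apply: contraT; rewrite negb_exists => /forallP H.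
  move: hv; rewrite -[v]submxrowK.
  suff -> : \mxrow_j submxrow v j = 0 by rewrite eqxx.
  by rewrite -(mxrow0 (q_ := n)); apply: eq_mxrow => i; apply/eqP; rewrite -(negbK (_ == _)) H.
rewrite (bigD1 j) //= ltr_wpDr //; last by case: (hX j) => _ /(_ _ hj).
apply: sumr_ge0 => i _; case: (hX i) => _ Hi.
by case: (eqVneq (submxrow v i) 0) => [->|/Hi /ltW //]; rewrite !mul0mx mxE.
Qed.

End Bdiag.

Lemma formT a (N : 'M[R]_a) (w : 'rV[R]_a) :
  (w *m N^T *m w^T) 0 0 = (w *m N *m w^T) 0 0.
Proof.
have -> : w *m N^T *m w^T = (w *m N *m w^T)^T by rewrite !trmx_mul trmxK mulmxA.
by rewrite mxE.
Qed.

Lemma nsd_form a (N : 'M[R]_a) :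
  (forall w : 'rV[R]_a, (w *m N *m w^T) 0 0 <= 0) -> nsd (N + N^T).
Proof.
move=> h; split; first by rewrite linearN linearD /= trmxK addrC.
move=> w; rewrite mulmxN mulNmx mxE oppr_ge0 mulmxDr mulmxDl mxE formT.
by rewrite -mulr2n mulrn_wle0.
Qed.

Lemma form_nsd a (N : 'M[R]_a) :
  nsd (N + N^T) -> forall w : 'rV[R]_a, (w *m N *m w^T) 0 0 <= 0.
Proof.
move=> [_ h] w; have := h w.
rewrite mulmxN mulNmx mxE oppr_ge0 mulmxDr mulmxDl mxE formT.
by rewrite -mulr2n pmulrn_lle0.
Qed.

Lemma formN n p (s : sys R n p) X (x : 'rV[R]_n) (u : 'rV[R]_p) :
  row_mx x u *m Nmx s X *m (row_mx x u)^T =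
  (x *m X *m sA s - u *m sC s) *m x^T + (x *m X *m sB s - u *m sD s) *m u^T.
Proof. by rewrite /Nmx mul_row_block tr_row_mx mul_row_col !mulmxN !mulmxA. Qed.

Lemma parallel_nsd k (n p : 'I_k -> nat) (s : forall j, sys R (n j) (p j))
  (X : forall j, 'M[R]_(n j)) :
  (forall j, (X j)^T = X j) -> (forall j, nsd (prl_mx (s j) (X j))) ->
  nsd (prl_mx (parallel s) (bdiag X)).
Proof.
move=> hX hM.
have hXb : (bdiag X)^T = bdiag X.
  by rewrite tr_bdiag; congr bdiag; apply: functional_extensionality_dep => j.
rewrite prlN //; apply: nsd_form => w.
rewrite -[w]hsubmxK formN; set x := lsubmx w; set u := rsubmx w.
rewrite -[x]submxrowK -[u]submxrowK /=.
rewrite !row_bdiag -!mxrowB !rowT_mxrow -big_split summxE /=.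
apply: sumr_le0 => j _.
have := hM j; rewrite prlN // => /form_nsd /(_ (row_mx (submxrow x j) (submxrow u j))).
by rewrite formN.
Qed.

Lemma diag_mul n (a b : 'rV[R]_n) :
  diag_mx a *m diag_mx b = diag_mx (\row_i (a 0 i * b 0 i)).
Proof.
apply/matrixP => i j; rewrite mul_diag_mx !mxE.
by case: (i == j); rewrite ?mulr1n ?mulr0n ?mulr0.
Qed.

Lemma chol_unit n (X R0 : 'M[R]_n) : cholesky X R0 -> R0 \in unitmx.
Proof.
move=> [_ hlow hpos]; rewrite unitmxE -det_tr det_trig.
  rewrite unitfE prodf_seq_neq0; apply/allP => i _ /=.
  by rewrite mxE; apply/lt0r_neq0/hpos.
by apply/is_trig_mxP => i j hij; rewrite mxE hlow.
Qed.

Lemma balance_facts n (Xi P Ri Ro U V : 'M[R]_n) g :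
  cholesky P Ri -> cholesky Xi Ro -> svd (Ro *m Ri^T) U g V ->
  [/\ balTinv Ri V g *m balT Ro U g = 1%:M,
      (balTinv Ri V g)^T *m Xi *m balTinv Ri V g = diag_mx g &
      forall a, 0 < g 0 a].
Proof.
move=> hP hX [[hU1 hU2] [hV1 hV2] hM hg0 _].
have uM : Ro *m Ri^T \in unitmx.
  by rewrite unitmx_mul unitmx_tr !(chol_unit hP, chol_unit hX).
have gpos : forall a, 0 < g 0 a.
  move=> a; rewrite lt_def hg0 andbT; apply/negP => /eqP ga.
  move: uM; rewrite hM unitmxE !det_mulmx det_diag (bigD1 a) //= ga mul0r mulr0 mul0r.
  by rewrite unitr0.
pose Gs := diag_isqrt g.
have sq : forall a, Num.sqrt (g 0 a) != 0.
  by move=> a; rewrite sqrtr_eq0 -ltNge gpos.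
have hGG : Gs *m diag_mx g *m Gs = 1%:M.
  rewrite /Gs /diag_isqrt !diag_mul; apply/matrixP => i j; rewrite !mxE.
  case: (i == j) => //; have := sq i; set t := Num.sqrt (g 0 i) => ht.
  have -> : g 0 i = t ^+ 2 by rewrite /t sqr_sqrtr ?ltW.
  by field.
have hGG2 : Gs *m (diag_mx g *m diag_mx g) *m Gs = diag_mx g.
  rewrite /Gs /diag_isqrt !diag_mul; apply/matrixP => i j; rewrite !mxE.
  case: (i == j) => //; have := sq i; set t := Num.sqrt (g 0 i) => ht.
  have -> : g 0 i = t ^+ 2 by rewrite /t sqr_sqrtr ?ltW.
  by field.
have hGs : Gs^T = Gs by rewrite tr_diag_mx.
have hTTi : balT Ro U g *m balTinv Ri V g = 1%:M.
  rewrite /balT /balTinv -/Gs !mulmxA -(mulmxA _ Ro) hM !mulmxA.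
  by rewrite -(mulmxA _ U^T U) hU1 mulmx1 -(mulmxA _ V^T V) hV1 mulmx1.
split => //; first exact: mulmx1C.
have hX' : Xi = Ro^T *m Ro by case: hX.
have hMT : Ri *m Ro^T = V *m diag_mx g *m U^T.
  by rewrite -[Ri]trmxK -trmx_mul hM !trmx_mul trmxK tr_diag_mx mulmxA.
rewrite /balTinv -/Gs !trmx_mul trmxK hGs hX' !mulmxA -(mulmxA _ Ri) hMT.
rewrite -(mulmxA _ Ro) hM !mulmxA -(mulmxA _ V^T V) hV1 mulmx1.
rewrite -(mulmxA _ U^T U) hU1 mulmx1 -(mulmxA _ V^T V) hV1 mulmx1.
by rewrite -(mulmxA Gs) hGG2.
Qed.

End Gen.

Unset Implicit Arguments. Set Strict Implicit. Set Printing Implicit Defensive.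

Theorem theorem9 (R : rcfType) (k : nat) (n p : 'I_k -> nat) (m : nat)
  (sig : forall j : 'I_k, sys R (n j) (p j))
  (S : 'M[R]_(\sum_j p j)) (Bcal : 'M[R]_(\sum_j p j, m))
  (Pc : 'M[R]_(\sum_j n j))
  (Xi : forall j : 'I_k, 'M[R]_(n j))
  (Ri Ro U V : forall j : 'I_k, 'M[R]_(n j))
  (g : forall j : 'I_k, 'rV[R]_(n j))
  (r : 'I_k -> nat) (hr : forall j : 'I_k, (r j <= n j)%N) :
  (forall j, passive (sig j) /\ minimal (sig j)) ->
  psd S ->
  (1%:M + sD (parallel sig) *m S) \in unitmx ->
  (1%:M + S *m sD (parallel sig)) \in unitmx ->
  let sigc := interconnect (parallel sig) S Bcal in
  passive sigc -> minimal sigc -> asymp_stable sigc ->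
  (* step 1: controllability Gramian of Sigma_c *)
  0 = sA sigc *m Pc + Pc *m (sA sigc)^T + sB sigc *m (sB sigc)^T ->
  (* step 2: available storages *)
  (forall j, available_storage (sig j) (Xi j)) ->
  (* step 3: balancing of Sigma_j with X_i = P_{j,j}, X_o = Xi_j *)
  (forall j, cholesky (@submxblock R k k n n Pc j j) (Ri j)) ->
  (forall j, cholesky (Xi j) (Ro j)) ->
  (forall j, svd (Ro j *m (Ri j)^T) (U j) (g j) (V j)) ->
  (* step 4: truncation to the leading r_j balanced states *)
  let sighat := fun j : 'I_k =>
    truncate (hr j) (balanced (sig j) (balT (Ro j) (U j) (g j))
                                      (balTinv (Ri j) (V j) (g j))) in
  (* step 5: reduced interconnection *)
  (forall j, passive (sighat j)) /\
  passive (interconnect (parallel sighat) S Bcal).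
Proof.
move=> _ hS u1 u2 sigc _ _ _ _ hXi hRi hRo hsvd sighat.
pose Xh j := diag_mx (\row_a (g j) 0 (widen_ord (hr j) a)).
have hj : forall j, posdef (Xh j) /\ nsd (prl_mx (sighat j) (Xh j)).
  move=> j; have [[hXs _] hXn _] := hXi j.
  have [hTT hG gpos] := balance_facts (hRi j) (hRo j) (hsvd j).
  split; first by apply: posdef_diag => a; rewrite mxE.
  apply: trunc_nsd; rewrite -hG; exact: balanced_nsd.
split; first by move=> j; exists (Xh j); apply: hj.
exists (bdiag Xh).
have hpd : posdef (bdiag Xh) by apply: posdef_bdiag => j; case: (hj j).
split => //.
apply: interconnect_nsd => //; first by case: hpd.
apply: parallel_nsd => j; case: (hj j) => // [[]] //.
Qed.
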